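(* Let $0<V\le1$ and let $P^{col}_{BB84}$ be the box on $a,b,x,y\in\{0,1\}$ given by $$P^{col}_{BB84}(ab|xy)=\frac{1+(-1)^{a\oplus b\oplus x\cdot y}\big[\delta_{x,y}V+\tfrac{1-V}{2}\big]+(-1)^{a\oplus b\oplus x\oplus y}\tfrac{1-V}{2}}{4}.$$ Let $\{|f_1\rangle,|f_2\rangle\}$ and $\{|g_1\rangle,|g_2\rangle\}$ be any two mutually unbiased orthonormal bases of $\mathbb{C}^2$ ($|\langle f_i|g_j\rangle|^2=1/2$ for all $i,j$), and let $\Pi_{b|0}=|f_{b+1}\rangle\langle f_{b+1}|$, $\Pi_{b|1}=|g_{b+1}\rangle\langle g_{b+1}|$. Then for every $V>0$, $P^{col}_{BB84}$ cannot be written as $$P^{col}_{BB84}(ab|xy)=\sum_{\chi,\zeta}p(\chi,\zeta)\,\delta_{a,f(x,\chi)}\,\langle\psi_\zeta|\Pi_{b|y}|\psi_\zeta\rangle\quad\forall a,b,x,y,$$ for any probability distribution $p(\chi,\zeta)$ (finitely many terms), any deterministic response functions $f(\cdot,\chi):\{0,1\}\to\{0,1\}$, and any pure qubit states $|\psi_\zeta\rangle\in\mathbb{C}^2$.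
   Context: $\oplus$ denotes addition modulo 2 and $\delta_{x,y}$ the Kronecker delta. The displayed decomposition is a convex mixture of the extremal points of the set of unsteerable boxes (boxes admitting a local hidden variable–local hidden state model) of the steering scenario in which Alice performs two black-box dichotomic measurements and Bob performs the two given qubit projective measurements. *)

(* Defs.v *)
From HB Require Import structures.
From mathcomp Require Import all_boot all_order all_algebra.
From mathcomp Require Import complex.
Set Implicit Arguments. Unset Strict Implicit. Unset Printing Implicit Defensive.
Import Order.TTheory GRing.Theory Num.Theory.
Local Open Scope ring_scope.
Local Open Scope complex_scope.

(* The box P^col_BB84(ab|xy); outcomes/settings a,b,x,y in {0,1} encoded as bool,
   a (+) b = addb, x.y = x && y, (-1)^b = (-1)^+ (nat_of_bool b). *)
Definition Pcol (R : rcfType) (V : R) (a b x y : bool) : R :=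
  (1 + (-1) ^+ (a (+) b (+) (x && y)) * ((x == y)%:R * V + (1 - V) / 2)
     + (-1) ^+ (a (+) b (+) x (+) y) * ((1 - V) / 2)) / 4.

Definition cdot (R : rcfType) (u v : 'cV[R[i]]_2) : R[i] :=
  \sum_(k < 2) (u k 0)^* * v k 0.

Definition proj (R : rcfType) (f : 'cV[R[i]]_2) : 'M[R[i]]_2 :=
  f *m (map_mx (@conjc R) f)^T.

Definition expect (R : rcfType) (psi : 'cV[R[i]]_2) (M : 'M[R[i]]_2) : R[i] :=
  ((map_mx (@conjc R) psi)^T *m M *m psi) 0 0.

(* Orthonormal basis {f false, f true} of C^2 (index b : bool stands for b+1). *)
Definition orthonormal2 (R : rcfType) (f : bool -> 'cV[R[i]]_2) : Prop :=
  forall i j : bool, cdot (f i) (f j) = (i == j)%:R.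

Definition mub2 (R : rcfType) (f g : bool -> 'cV[R[i]]_2) : Prop :=
  orthonormal2 f /\ orthonormal2 g /\
  forall i j : bool, (cdot (f i) (g j)) * (cdot (f i) (g j))^* = (1 / 2)%:C.

Definition pure_state (R : rcfType) (psi : 'cV[R[i]]_2) : Prop :=
  cdot psi psi = 1.

(* Main.v *)
Require Import Defs.
From HB Require Import structures.
From mathcomp Require Import all_boot all_order all_algebra.
From mathcomp Require Import complex.
From mathcomp Require Import ring lra.
Import Order.TTheory GRing.Theory Num.Theory.
Local Open Scope ring_scope.


Lemma cE (R : rcfType) (x : R[i]) : conjc x = Num.conj x.
Proof. reflexivity. Qed.

Lemma big_ord2 (V : nmodType) (F : 'I_2 -> V) : \sum_(i < 2) F i = F ord0 + F ord_max.
Proof. by rewrite big_ord_recl big_ord1; congr (_ + F _); apply: val_inj. Qed.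

Lemma ord1_0 : (0 : 'I_1) = ord0.
Proof. exact: val_inj. Qed.

Lemma id1 (T : comPzRingType) (a0 a1 b0 b1 c0 c1 d0 d1: T) :
  (a0*(c0*d0) + a1*(c1*d0))*b0 + (a0*(c0*d1)+a1*(c1*d1))*b1 = (a0*c0 + a1*c1)*(d0*b0 + d1*b1).
Proof. ring. Qed.

Lemma id2 (T : comPzRingType) (U0 U1 V0 V1 a0 a1 A0 A1 b0 b1 B0 B1 : T) :
 a0*A0 + b0*B0 = 1 -> a0*A1 + b0*B1 = 0 -> a1*A0 + b1*B0 = 0 -> a1*A1 + b1*B1 = 1 ->
 U0*V0 + U1*V1 = (U0*a0 + U1*a1)*(A0*V0 + A1*V1) + (U0*b0+U1*b1)*(B0*V0+B1*V1).
Proof.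
move=> h1 h2 h3 h4.
transitivity (U0*V0*(a0*A0+b0*B0) + U0*V1*(a0*A1+b0*B1) + U1*V0*(a1*A0+b1*B0) + U1*V1*(a1*A1+b1*B1)).
  by rewrite h1 h2 h3 h4; ring.
ring.
Qed.

Lemma cM (C : numClosedFieldType) (x y : C) : Num.conj (x * y) = Num.conj x * Num.conj y.
Proof. exact: rmorphM. Qed.
Lemma cD (C : numClosedFieldType) (x y : C) : Num.conj (x + y) = Num.conj x + Num.conj y.
Proof. exact: rmorphD. Qed.
Lemma cK (C : numClosedFieldType) (x : C) : Num.conj (Num.conj x) = x.
Proof. exact: conjCK. Qed.

Lemma conj_cdot (R : rcfType) (u v : 'cV[R[i]]_2) : (cdot u v)^* = cdot v u.
Proof.
rewrite /cdot !big_ord2 cD !cM !cK. ring.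
Qed.

Lemma expect_proj (R : rcfType) (psi v : 'cV[R[i]]_2) :
  expect psi (proj v) = (cdot v psi)^* * cdot v psi.
Proof.
rewrite conj_cdot /expect /proj /cdot !mxE !big_ord2 !mxE !big_ord2 !mxE !big_ord1 !mxE !cE !ord1_0.
exact: id1.
Qed.

Lemma complete (R : rcfType) (f : bool -> 'cV[R[i]]_2) : orthonormal2 f ->
  forall u v, cdot u v = cdot u (f false) * cdot (f false) v
                       + cdot u (f true) * cdot (f true) v.
Proof.
move=> hf u v.
pose F : 'M[R[i]]_2 := \matrix_(k, j) f (j != ord0) k 0.
pose Fd : 'M[R[i]]_2 := \matrix_(j, k) (f (j != ord0) k 0)^*.
have h1 : Fd *m F = 1%:M.
  apply/matrixP => i j; rewrite !mxE big_ord2 !mxE.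
  have := hf (i != ord0) (j != ord0); rewrite /cdot big_ord2 => ->.
  by case: i => [[|[|//]] Hi]; case: j => [[|[|//]] Hj].
have h2 := mulmx1C h1.
have E : forall k l, f false k 0 * (f false l 0)^* + f true k 0 * (f true l 0)^* = (k == l)%:R.
  move=> k l; move/matrixP: h2 => /(_ k l); rewrite !mxE big_ord2 !mxE /=.
  done.
rewrite /cdot !big_ord2.
apply: id2; by rewrite E.
Qed.

Local Open Scope complex_scope.

Lemma key (R : rcfType) (f g : bool -> 'cV[R[i]]_2) (psi : 'cV[R[i]]_2) :
  mub2 f g -> pure_state psi -> forall b c,
  expect psi (proj (f b)) = 0 -> expect psi (proj (g c)) = (1/2)%:C.
Proof.
move=> [hf [hg hm]] hpsi b c.
rewrite !expect_proj => /eqP; rewrite mulf_eq0 conjC_eq0 orbb => /eqP h0.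
have hc := @complete _ _ hf.
have [b' [e1 e2]] : exists b', cdot (g c) psi = cdot (g c) (f b') * cdot (f b') psi
    /\ cdot psi psi = cdot psi (f b') * cdot (f b') psi.
  case: b h0 => h0; [exists false | exists true];
  by split; rewrite {1}hc h0 mulr0 ?add0r ?addr0.
rewrite e1 cM !conj_cdot -[cdot (g c) (f b')]conj_cdot mulrACA hm -e2.
by rewrite hpsi mulr1.
Qed.

Theorem theorem2 (R : rcfType) (V : R) (hV0 : 0 < V) (hV1 : V <= 1)
    (f g : bool -> 'cV[R[i]]_2) (hfg : mub2 f g) :
  ~ exists (X Z : finType) (p : X -> Z -> R) (resp : X -> bool -> bool)
      (psi : Z -> 'cV[R[i]]_2),
      (forall chi zeta, 0 <= p chi zeta) /\
      \sum_(chi : X) \sum_(zeta : Z) p chi zeta = 1 /\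
      (forall zeta, pure_state (psi zeta)) /\
      forall a b x y : bool,
        (Pcol V a b x y)%:C =
        \sum_(chi : X) \sum_(zeta : Z)
          (p chi zeta)%:C * (a == resp chi x)%:R *
          expect (psi zeta) (proj (if y then g b else f b)).

Proof.
move=> [X [Z [p [resp [psi [hp0 [hp1 [hpure H]]]]]]]].
have e_ge0 : forall z v, 0 <= expect (psi z) (proj v).
  move=> z v; rewrite expect_proj mulrC; exact: mul_conjC_ge0.
have t_ge0 : forall a x v chi z, 0 <= (p chi z)%:C * (a == resp chi x)%:R * expect (psi z) (proj v).
  move=> a x v chi z; apply: mulr_ge0; last exact: e_ge0.
  by apply: mulr_ge0; [rewrite ler0c | exact: ler0n].
have zero : forall a chi z, (p chi z)%:C * (a == resp chi false)%:R * expect (psi z) (proj (f (~~ a))) = 0.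
  move=> a chi z.
  have P0 : Pcol V a (~~ a) false false = 0 by case: a; rewrite /Pcol /=; lra.
  have h := H a (~~ a) false false.
  rewrite P0 /= in h.
  have hs : \sum_(chi : X) \sum_(zeta : Z) (p chi zeta)%:C * (a == resp chi false)%:R *
          expect (psi zeta) (proj (f (~~ a))) = 0 by rewrite -h.
  have := psumr_eq0P _ hs; move=> /(_ _) hh.
  have hh2 := hh (fun i _ => sumr_ge0 _ (fun j _ => t_ge0 _ _ _ _ _)) chi isT.
  apply: (psumr_eq0P _ hh2) => // j _; exact: t_ge0.
have half : forall chi z c, (p chi z)%:C * expect (psi z) (proj (g c)) = (p chi z)%:C * (1/2)%:C.
  move=> chi z c.
  have := zero (resp chi false) chi z; rewrite eqxx mulr1 => /eqP.
  rewrite mulf_eq0 => /orP [/eqP -> | /eqP he]; first by rewrite !mul0r.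
  by rewrite (@key _ _ _ _ hfg (hpure z) _ _ he).
have H0 := H false false true true; have H1 := H false true true true.
have : (Pcol V false false true true)%:C = (Pcol V false true true true)%:C.
  rewrite H0 H1 /=; apply: eq_bigr => chi _; apply: eq_bigr => z _.
  by rewrite !(mulrAC (p chi z)%:C _ (expect _ _)) !half.
move/complexI; rewrite /Pcol /= ?expr0 ?expr1 ?mulr1n ?mulr0n; lra.
Qed.
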